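(* Let $\mathfrak g$ be a barrelled locally convex Lie algebra, $(\pi,V)$ a continuous unitary representation of $\mathfrak g$, and $n\in\mathbb N\cup\{\infty\}$. Let $t\mapsto\xi_t$ be a $C^n$-curve in $\mathfrak g$ and $t\mapsto\psi_t$ a $C^n$-curve in $V$ for the strong (resp. weak) topology, both defined on a common real interval. Then $t\mapsto\pi(\xi_t)\psi_t$ is a $C^n$-curve in $V$ for the strong (resp. weak) topology, and for all integers $0\le k\le n$, $$\frac{d^k}{dt^k}\pi(\xi_t)\psi_t=\sum_{j=0}^{k}\binom{k}{j}\pi\big(\xi^{(j)}_t\big)\psi^{(k-j)}_t.$$
   Context: Barrelled: every closed, convex, circled, absorbing subset is a $0$-neighbourhood. A unitary representation $(\pi,V)$ of $\mathfrak g$: $V$ complex pre-Hilbert (completion $\mathcal H_V$), $\pi\colon\mathfrak g\to\mathrm{End}(V)$ a Lie algebra homomorphism with skew-symmetric values. $\pi_n(\xi_n,\dots,\xi_1)=\pi(\xi_n)\cdots\pi(\xi_1)$, $\pi_0(\lambda)=\lambda\mathbf 1$. Continuous: $\boldsymbol\xi\mapsto\pi_n(\boldsymbol\xi)\psi$, $\mathfrak g^n\to\mathcal H_V$, norm continuous for all $n,\psi$. Weak topology: seminorms $\|\pi_n(\boldsymbol\xi)\psi\|$, $\boldsymbol\xi\in\mathfrak g^n$; strong topology: seminorms $\sup_{\boldsymbol\xi\in B}\|\pi_n(\boldsymbol\xi)\psi\|$, $B\subseteq\mathfrak g^n$ bounded. $C^n$-curves into a locally convex space: iterated derivatives (limits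 of difference quotients) up to order $n$ exist and are continuous. *)

(* Defs.v *)
From HB Require Import structures.
From mathcomp Require Import all_boot all_order all_algebra.
From mathcomp Require Import all_classical all_reals.
From mathcomp Require Import all_analysis.
From mathcomp Require Import complex.

Set Implicit Arguments.
Unset Strict Implicit.
Unset Printing Implicit Defensive.

Import Order.TTheory GRing.Theory Num.Theory.
Import numFieldNormedType.Exports.
Local Open Scope classical_set_scope.
Local Open Scope ring_scope.

(** A real locally convex Lie algebra: a locally convex topological vector
    space [g] over [R] (mathcomp's [tvsType], which is locally convex by
    definition) with a Lie bracket [br] that is bilinear, alternating,
    satisfies the Jacobi identity and is jointly continuous. *)
Definition lie_bracket (R : realType) (g : tvsType R) (br : g -> g -> g) :=
  [/\ (forall (a : R) x y z, br (a *: x + y) z = a *: br x z + br y z),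
      (forall (a : R) x y z, br z (a *: x + y) = a *: br z x + br z y),
      (forall x, br x x = 0),
      (forall x y z, br x (br y z) + br y (br z x) + br z (br x y) = 0) &
      continuous (fun p : g * g => br p.1 p.2)].

Definition circled (R : realType) (g : tvsType R) (A : set g) :=
  forall (l : R) x, `|l| <= 1 -> A x -> A (l *: x).

Definition absorbing (R : realType) (g : tvsType R) (A : set g) :=
  forall x : g, exists2 r : R, 0 < r & forall l : R, `|l| <= r -> A (l *: x).

Definition barrelled (R : realType) (g : tvsType R) :=
  forall A : set g, closed A -> convex_set A -> circled A -> absorbing A ->
    nbhs (0 : g) A.

(** Bounded subsets of [g^n] (product topology): for every 0-neighbourhood
    [U] of [g] there is [r > 0] with [B ⊆ t U^n] for all [t > r]. *)
Definition bounded_tuples (R : realType) (g : tvsType R) (n : nat)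
    (B : set ('I_n -> g)) :=
  forall U : set g, nbhs (0 : g) U ->
    exists2 r : R, 0 < r & forall t : R, r < t ->
      forall xs, B xs -> forall i, U (t^-1 *: xs i).

Local Open Scope complex_scope.

Definition inner_product (R : realType) (V : lmodType R[i])
    (ip : V -> V -> R[i]) :=
  [/\ (forall (a : R[i]) u v w, ip (a *: u + v) w = a * ip u w + ip v w),
      (forall u v, ip u v = (ip v u)^*),
      (forall v, 0 <= ip v v) &
      (forall v, ip v v = 0 -> v = 0)].

Definition ipnorm (R : realType) (V : lmodType R[i]) (ip : V -> V -> R[i])
    (v : V) : R := Num.sqrt (complex.Re (ip v v)).

(** pi_n(xs) psi = pi(xs 0) (pi (xs 1) ( ... pi (xs (n-1)) psi)).
    (The paper writes pi_n(xi_n,...,xi_1) = pi(xi_n)...pi(xi_1); we index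
    the arguments from the outermost one.)  For [n = 0] this is [psi]. *)
Definition pin (R : realType) (g : tvsType R) (V : lmodType R[i])
    (pi : g -> V -> V) (n : nat) (xs : 'I_n -> g) (psi : V) : V :=
  foldr (fun i v => pi (xs i) v) psi (enum 'I_n).

Definition unitary_rep (R : realType) (g : tvsType R) (br : g -> g -> g)
    (V : lmodType R[i]) (ip : V -> V -> R[i]) (pi : g -> V -> V) :=
  [/\ (forall x (a : R[i]) u v, pi x (a *: u + v) = a *: pi x u + pi x v),
      (forall (a : R) x y v, pi (a *: x + y) v = a%:C *: pi x v + pi y v),
      (forall x y v, pi (br x y) v = pi x (pi y v) - pi y (pi x v)) &
      (forall x u v, ip (pi x u) v = - ip u (pi x v))].

Definition continuous_rep (R : realType) (g : tvsType R)
    (V : lmodType R[i]) (ip : V -> V -> R[i]) (pi : g -> V -> V) :=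
  forall (n : nat) (psi : V) (xs : 'I_n -> g) (eps : R), 0 < eps ->
    exists U : 'I_n -> set g, (forall i, nbhs (xs i) (U i)) /\
      forall ys : 'I_n -> g, (forall i, U i (ys i)) ->
        ipnorm ip (pin pi ys psi - pin pi xs psi) < eps.

Inductive topV := Strong | Weak.

(** index sets of the defining seminorms
    [psi |-> sup_{xs in B} ||pi_n(xs) psi||]:
    bounded [B] for the strong topology, singletons for the weak one. *)
Definition admissible (R : realType) (g : tvsType R) (tau : topV) (n : nat)
    (B : set ('I_n -> g)) : Prop :=
  match tau with
  | Strong => bounded_tuples B
  | Weak => exists xs, B = [set xs]
  end.

Definition cvgV (R : realType) (g : tvsType R) (V : lmodType R[i])
    (ip : V -> V -> R[i]) (pi : g -> V -> V) (tau : topV)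
    (f : R -> V) (F : set_system R) (l : V) :=
  forall (n : nat) (B : set ('I_n -> g)), admissible tau B ->
    forall eps : R, 0 < eps ->
      \forall h \near F, forall xs, B xs -> ipnorm ip (pin pi xs (f h - l)) <= eps.

(** [n ∈ ℕ ∪ {∞}] : [None] stands for [∞] *)
Definition le_ext (j : nat) (n : option nat) : bool :=
  if n is Some m then (j <= m)%N else true.
Definition lt_ext (j : nat) (n : option nat) : bool :=
  if n is Some m then (j < m)%N else true.

Definition CnV (R : realType) (g : tvsType R) (V : lmodType R[i])
    (ip : V -> V -> R[i]) (pi : g -> V -> V) (tau : topV)
    (I : interval R) (n : option nat) (ds : nat -> R -> V) :=
  (forall j, le_ext j n -> forall t, t \in I ->
     cvgV ip pi tau (ds j) (within [set s | s \in I] (nbhs t)) (ds j t)) /\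
  (forall j, lt_ext j n -> forall t, t \in I ->
     cvgV ip pi tau (fun s => (s - t)^-1%:C *: (ds j s - ds j t))
       (within [set s | s \in I /\ s != t] (nbhs t)) (ds j.+1 t)).

Definition Cng (R : realType) (g : tvsType R)
    (I : interval R) (n : option nat) (ds : nat -> R -> g) :=
  (forall j, le_ext j n -> forall t, t \in I ->
     ds j @ within [set s | s \in I] (nbhs t) --> ds j t) /\
  (forall j, lt_ext j n -> forall t, t \in I ->
     (fun s => (s - t)^-1 *: (ds j s - ds j t))
       @ within [set s | s \in I /\ s != t] (nbhs t) --> ds j.+1 t).

(* Main.v *)
Require Import Defs.
From HB Require Import structures.
From mathcomp Require Import all_boot all_order all_algebra.
From mathcomp Require Import all_classical all_reals all_analysis.
From mathcomp Require Import complex.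
From mathcomp Require Import ring lra.
Import Order.TTheory GRing.Theory Num.Theory.
Import numFieldNormedType.Exports.
Set Implicit Arguments.
Unset Strict Implicit.
Unset Printing Implicit Defensive.
Local Open Scope classical_set_scope.
Local Open Scope ring_scope.
Local Open Scope complex_scope.

Section IP.
Context (R : realType) (V : lmodType R[i]) (ip : V -> V -> R[i]).
Hypothesis Hip : inner_product ip.

Let b u v := complex.Re (ip u v).

Lemma ReCM (l : R) (z : R[i]) : complex.Re (l%:C * z) = l * complex.Re z.
Proof. by case: z => x y /=; rewrite mul0r subr0. Qed.

Lemma Re_conj (z : R[i]) : complex.Re (z^*) = complex.Re z.
Proof. by case: z. Qed.

Let bDl (l : R) u v w : b (l%:C *: u + v) w = l * b u w + b v w.
Proof. by case: Hip => H _ _ _; rewrite /b H raddfD /= ReCM. Qed.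

Let bC u v : b u v = b v u.
Proof. by case: Hip => _ H _ _; rewrite /b H Re_conj. Qed.

Let bge0 u : 0 <= b u u.
Proof. by case: Hip => _ _ H _; have := H u; rewrite lecE /= => /andP[]. Qed.

Let bD u v w : b (u + v) w = b u w + b v w.
Proof. by rewrite -[u](scale1r) bDl mul1r scale1r. Qed.

Let b0l w : b 0 w = 0.
Proof. by have := bD 0 0 w; rewrite addr0; lra. Qed.

Let bZ (l : R) u w : b (l%:C *: u) w = l * b u w.
Proof. by rewrite -[_ *: u]addr0 bDl b0l addr0. Qed.

Let bZr (l : R) u w : b w (l%:C *: u) = l * b w u.
Proof. by rewrite bC bZ bC. Qed.

Let bDr u v w : b w (u + v) = b w u + b w v.
Proof. by rewrite bC bD !(bC w). Qed.

Lemma CS u v : b u v ^+ 2 <= b u u * b v v.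
Proof.
have H l : 0 <= b u u + 2 * l * b u v + l ^+ 2 * b v v.
  have := bge0 (u + l%:C *: v).
  by rewrite bD !bDr !bZ !bZr (bC v u); lra.
have [a0|a0] := eqVneq (b v v) 0.
  rewrite a0 mulr0.
  have [->|bn0] := eqVneq (b u v) 0; first by rewrite expr0n.
  have := H (- (b u u + 1) / (2 * b u v)); rewrite a0 mulr0 addr0.
  have -> : 2 * (- (b u u + 1) / (2 * b u v)) * b u v = - (b u u + 1).
    by field; rewrite bn0 /=.
  lra.
have ap : 0 < b v v by rewrite lt_neqAle eq_sym a0 bge0.
have := H (- b u v / b v v).
have -> : b u u + 2 * (- b u v / b v v) * b u v + (- b u v / b v v) ^+ 2 * b v v
   = b u u - b u v ^+ 2 / b v v by field.
by rewrite subr_ge0 ler_pdivrMr // mulrC.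
Qed.


Lemma ipnorm_ge0 v : 0 <= ipnorm ip v.
Proof. exact: sqrtr_ge0. Qed.

Lemma ipnormD u v : ipnorm ip (u + v) <= ipnorm ip u + ipnorm ip v.
Proof.
rewrite /ipnorm -/(b u u) -/(b v v) -/(b (u+v) (u+v)).
set su := Num.sqrt (b u u); set sv := Num.sqrt (b v v).
have su0 : 0 <= su by exact: sqrtr_ge0.
have sv0 : 0 <= sv by exact: sqrtr_ge0.
have e1 : su ^+ 2 = b u u by rewrite sqr_sqrtr.
have e2 : sv ^+ 2 = b v v by rewrite sqr_sqrtr.
have hcs := CS u v.
have h : b u v <= su * sv.
  have : b u v ^+ 2 <= (su * sv) ^+ 2 by rewrite exprMn e1 e2.
  have : 0 <= su * sv by rewrite mulr_ge0.
  nra.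
rewrite -(ger0_norm (addr_ge0 su0 sv0)) -sqrtr_sqr ler_sqrt ?sqr_ge0 //.
rewrite bD !bDr (bC v u).
have : (su + sv) ^+ 2 = su ^+ 2 + sv ^+ 2 + 2 * (su * sv) by ring.
rewrite e1 e2 => ->; lra.
Qed.

Lemma ipnormZ (l : R) v : ipnorm ip (l%:C *: v) = `|l| * ipnorm ip v.
Proof.
rewrite /ipnorm -/(b v v) -/(b (l%:C *: v) (l%:C *: v)) bZ bZr mulrA -expr2.
by rewrite sqrtrM ?sqr_ge0 // sqrtr_sqr.
Qed.

Lemma ipnorm0 : ipnorm ip 0 = 0.
Proof. by rewrite -(scale0r 0) -(rmorph0 (real_complex R)) ipnormZ normr0 mul0r. Qed.

Lemma ipnormN v : ipnorm ip (- v) = ipnorm ip v.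
Proof.
rewrite -scaleN1r.
have -> : (-1 : R[i]) = (-1 : R)%:C by rewrite rmorphN1.
by rewrite ipnormZ normrN normr1 mul1r.
Qed.

Lemma ipnormB u v : ipnorm ip (u - v) = ipnorm ip (v - u).
Proof. by rewrite -ipnormN opprB. Qed.

End IP.


Section Pin.
Context (R : realType) (g : tvsType R) (br : g -> g -> g)
  (V : lmodType R[i]) (ip : V -> V -> R[i]) (pi : g -> V -> V).
Hypothesis Hpi : unitary_rep br ip pi.

Lemma selfadd0 (M : zmodType) (a : M) : a = a + a -> a = 0.
Proof. by move/(congr1 (fun z => z - a)); rewrite subrr addrK. Qed.

Lemma pi_lin x (a : R[i]) u v : pi x (a *: u + v) = a *: pi x u + pi x v.
Proof. by case: Hpi. Qed.
Lemma pi_rlin (a : R) x y v : pi (a *: x + y) v = a%:C *: pi x v + pi y v.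
Proof. by case: Hpi. Qed.

Lemma pi_x0 x : pi x 0 = 0.
Proof. by have := pi_lin x 1 0 0; rewrite !scale1r addr0 => /selfadd0. Qed.
Lemma pi_xD x u v : pi x (u + v) = pi x u + pi x v.
Proof. by have := pi_lin x 1 u v; rewrite !scale1r. Qed.
Lemma pi_xZ x a u : pi x (a *: u) = a *: pi x u.
Proof. by rewrite -[a *: u]addr0 pi_lin pi_x0 addr0. Qed.
Lemma pi_0 v : pi 0 v = 0.
Proof. by have := pi_rlin 1 0 0 v; rewrite scale1r addr0 rmorph1 scale1r => /selfadd0. Qed.
Lemma pi_D x y v : pi (x + y) v = pi x v + pi y v.
Proof. by have := pi_rlin 1 x y v; rewrite !scale1r. Qed.
Lemma pi_Z (a : R) x v : pi (a *: x) v = a%:C *: pi x v.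
Proof. by rewrite -[a *: x]addr0 pi_rlin pi_0 addr0. Qed.
Lemma pi_N x v : pi (- x) v = - pi x v.
Proof. by rewrite -(scaleN1r x) pi_Z rmorphN1 scaleN1r. Qed.
Lemma pi_B x y v : pi (x - y) v = pi x v - pi y v.
Proof. by rewrite pi_D pi_N. Qed.

Lemma pinZD n (xs : 'I_n -> g) a u v :
  pin pi xs (a *: u + v) = a *: pin pi xs u + pin pi xs v.
Proof.
rewrite /pin; elim: (enum 'I_n) => [|i l IH] //=.
by rewrite IH pi_lin.
Qed.
Lemma pin0 n (xs : 'I_n -> g) : pin pi xs 0 = 0.
Proof. by have := pinZD xs 1 0 0; rewrite !scale1r addr0 => /selfadd0. Qed.
Lemma pinD n (xs : 'I_n -> g) u v : pin pi xs (u + v) = pin pi xs u + pin pi xs v.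
Proof. by have := pinZD xs 1 u v; rewrite !scale1r. Qed.
Lemma pinZ n (xs : 'I_n -> g) a u : pin pi xs (a *: u) = a *: pin pi xs u.
Proof. by rewrite -[a *: u]addr0 pinZD pin0 addr0. Qed.
Lemma pinN n (xs : 'I_n -> g) u : pin pi xs (- u) = - pin pi xs u.
Proof. by rewrite -scaleN1r pinZ scaleN1r. Qed.
Lemma pinB n (xs : 'I_n -> g) u v : pin pi xs (u - v) = pin pi xs u - pin pi xs v.
Proof. by rewrite pinD pinN. Qed.
Lemma pinMn n (xs : 'I_n -> g) u m : pin pi xs (u *+ m) = pin pi xs u *+ m.
Proof. by elim: m => [|m IH]; rewrite ?mulr0n ?pin0 // !mulrS pinD IH. Qed.
Lemma pin_sum n (xs : 'I_n -> g) m (f : 'I_m -> V) :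
  pin pi xs (\sum_(i < m) f i) = \sum_(i < m) pin pi xs (f i).
Proof.
elim: m f => [|m IH] f; first by rewrite !big_ord0 pin0.
by rewrite !big_ord_recr /= pinD IH.
Qed.

Lemma pin_last n (ys : 'I_n.+1 -> g) w :
  pin pi ys w = pin pi (fun j : 'I_n => ys (widen_ord (leqnSn n) j)) (pi (ys ord_max) w).
Proof. by rewrite /pin enum_ordSr foldr_rcons foldr_map. Qed.

Definition snoc n (xs : 'I_n -> g) (e : g) : 'I_n.+1 -> g :=
  fun i => if insub (val i) is Some j then xs j else e.

Lemma snoc_widen n (xs : 'I_n -> g) e j : snoc xs e (widen_ord (leqnSn n) j) = xs j.
Proof.
rewrite /snoc; case: insubP => [k _ kj|]; last by rewrite /= ltn_ord.
by congr xs; apply: val_inj; rewrite kj.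
Qed.

Lemma snoc_max n (xs : 'I_n -> g) e : snoc xs e ord_max = e.
Proof. by rewrite /snoc; case: insubP => [k|] //=; rewrite ltnn. Qed.

Lemma pin_snoc n (xs : 'I_n -> g) e w : pin pi (snoc xs e) w = pin pi xs (pi e w).
Proof.
rewrite pin_last snoc_max; congr pin.
by apply: funext => j; rewrite snoc_widen.
Qed.

Lemma pin_scale n (xs : 'I_n -> g) (c : R) w :
  pin pi (fun i => c *: xs i) w = (c ^+ n)%:C *: pin pi xs w.
Proof.
rewrite /pin -[in c ^+ n](size_enum_ord n); elim: (enum 'I_n) => [|i l IH] /=.
  by rewrite expr0 rmorph1 scale1r.
by rewrite IH pi_Z pi_xZ scalerA -rmorphM exprS.
Qed.

Lemma pin_zero n w : pin pi (fun _ : 'I_n.+1 => 0) w = 0.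
Proof. by rewrite pin_last pi_0 pin0. Qed.

End Pin.

Section Top.
Context (R : realType) (g : tvsType R).

Lemma scale_near0 (x : g) (U : set g) : nbhs (0 : g) U ->
  \forall l \near (0 : R), U (l *: x).
Proof.
move=> U0.
have := @scale_continuous R g (0, x) U; rewrite /= scale0r => /(_ U0).
case=> /= [[A B]] [/= A0 Bx] AB.
have /nbhs_ballP[e e0 eA] := A0.
apply/nbhs_ballP; exists e => // l le; apply: (AB (l, x)); split => //=.
  exact: eA.
exact: nbhs_singleton.
Qed.

Lemma bounded_single n (xs : 'I_n -> g) : bounded_tuples [set xs].
Proof.
move=> U U0.
have : \forall l \near (0 : R), forall i, U (l *: xs i).
  have := @filter_forall R _ (fun i l => U (l *: xs i)) (nbhs (0:R)) _ (fun i => scale_near0 (xs i) U0).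
  exact.
move=> /nbhs_ballP[e e0 H].
exists e^-1 => [|t tr ys -> i]; first by rewrite invr_gt0.
have t0 : 0 < t by apply: lt_trans tr; rewrite invr_gt0.
apply: H; rewrite /ball /= sub0r normrN ger0_norm ?invr_ge0 ?ltW //.
by rewrite invf_plt.
Qed.

Lemma snocP n (i : 'I_n.+1) : (exists j : 'I_n, i = widen_ord (leqnSn n) j) \/ i = ord_max.
Proof.
have [h|h] := ltnP i n.
  by left; exists (Ordinal h); apply: val_inj.
by right; apply: val_inj => /=; apply/eqP; rewrite eqn_leq h -ltnS ltn_ord.
Qed.

Lemma bounded_snoc n (B : set ('I_n -> g)) e :
  bounded_tuples B -> bounded_tuples ((fun xs => snoc xs e) @` B).
Proof.
move=> HB U U0.
have [r1 r10 H1] := HB U U0.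
have [r2 r20 H2] := bounded_single (fun _ : 'I_1 => e) U0.
exists (Num.max r1 r2) => [|t tr _ [xs Bx <-] i]; first by rewrite lt_max r10.
rewrite gt_max in tr; case/andP: tr => t1 t2.
have [[j ->]|->] := snocP i.
  by rewrite snoc_widen; apply: H1.
by rewrite snoc_max; apply: (H2 t t2 _ erefl ord0).
Qed.

Lemma adm_bounded tau n (B : set ('I_n -> g)) : admissible tau B -> bounded_tuples B.
Proof. by case: tau => //= -[xs ->]; exact: bounded_single. Qed.

Lemma adm_snoc tau n (B : set ('I_n -> g)) e :
  admissible tau B -> admissible tau ((fun xs => snoc xs e) @` B).
Proof.
case: tau => /=; first exact: bounded_snoc.
by case=> xs ->; exists (snoc xs e); rewrite image_set1.
Qed.

End Top.

Section Main.
Context (R : realType) (g : tvsType R) (br : g -> g -> g)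
  (V : lmodType R[i]) (ip : V -> V -> R[i]) (pi : g -> V -> V).
Hypothesis Hip : inner_product ip.
Hypothesis Hpi : unitary_rep br ip pi.
Hypothesis Hc : continuous_rep ip pi.
Hypothesis Hbar : barrelled g.

Local Notation N := (ipnorm ip).

Lemma Nsub a b : N a <= N (a - b) + N b.
Proof. by have := ipnormD Hip (a - b) b; rewrite subrK. Qed.

Lemma forall_nbhs0 n (U : 'I_n -> set g) :
  (forall i, nbhs (0 : g) (U i)) -> nbhs (0 : g) [set x | forall i, U i x].
Proof. move=> H; have := @filter_forall g 'I_n (fun i x => U i x) (nbhs (0:g)) _ H; exact. Qed.

Lemma UB n (B : set ('I_n -> g)) w : bounded_tuples B ->
  exists C, forall xs, B xs -> N (pin pi xs w) <= C.
Proof.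
move=> HB.
have [U [U0 HU]] := Hc w (fun _ : 'I_n => 0) ltr01.
have [r r0 Hr] := HB _ (forall_nbhs0 U0).
set t := r + 1.
have tr : r < t by rewrite /t ltrDl.
have t0 : 0 < t by apply: lt_trans tr.
exists (t ^+ n * (1 + N (pin pi (fun _ : 'I_n => 0) w))) => xs Bx.
have Hy := HU (fun i => t^-1 *: xs i) (fun i => Hr t tr xs Bx i i).
have E : pin pi xs w = (t ^+ n)%:C *: pin pi (fun i => t^-1 *: xs i) w.
  rewrite (pin_scale Hpi) scalerA -rmorphM -exprMn mulfV ?gt_eqF //.
  by rewrite expr1n rmorph1 scale1r.
rewrite E ipnormZ // ger0_norm; last by rewrite exprn_ge0 // ltW.
rewrite ler_pM2l ?exprn_gt0 //.
apply: le_trans (Nsub _ (pin pi (fun _ : 'I_n => 0) w)) _.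
by rewrite lerD2r ltW.
Qed.

Lemma slot_small n (B : set ('I_n -> g)) w eps : bounded_tuples B -> 0 < eps ->
  \forall e \near (0 : g), forall xs, B xs -> N (pin pi (snoc xs e) w) <= eps.
Proof.
move=> HB eps0.
have [U [U0 HU]] := Hc w (fun _ : 'I_n.+1 => 0) eps0.
rewrite (pin_zero Hpi) in HU.
have W0 := forall_nbhs0 U0.
have [r r0 Hr] := HB _ W0.
set t := r + 1.
have tr : r < t by rewrite /t ltrDl.
have t0 : 0 < t by apply: lt_trans tr.
have tn0 : t ^+ n != 0 by rewrite expf_neq0 // gt_eqF.
have := nbhs0Z (invr_neq0 tn0) W0.
apply: filterS => e [y Wy <-] xs Bx.
set ys := snoc (fun i => t^-1 *: xs i) (t ^+ n *: ((t ^+ n)^-1 *: y)).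
have Wys : forall i, U i (ys i).
  move=> i; have [[j ->]|->] := snocP i.
    by rewrite /ys snoc_widen; apply: (Hr t tr xs Bx j).
  by rewrite /ys snoc_max scalerA mulfV // scale1r; apply: Wy.
have := HU ys Wys; rewrite subr0 => /ltW; congr (_ <= _); congr N.
rewrite /ys !pin_snoc (pin_scale Hpi) (pi_Z Hpi) (pinZ Hpi) scalerA -rmorphM.
by rewrite -exprMn mulVf ?gt_eqF // expr1n rmorph1 scale1r.
Qed.

End Main.

Section Barrel.
Context (R : realType) (g : tvsType R) (br : g -> g -> g)
  (V : lmodType R[i]) (ip : V -> V -> R[i]) (pi : g -> V -> V).
Hypothesis Hip : inner_product ip.
Hypothesis Hpi : unitary_rep br ip pi.
Hypothesis Hc : continuous_rep ip pi.
Hypothesis Hbar : barrelled g.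

Local Notation N := (ipnorm ip).

Definition cvgS (tau : topV) (w : nat -> V) :=
  forall n (B : set ('I_n -> g)), admissible tau B -> forall eps : R, 0 < eps ->
    \forall k \near \oo, forall xs, B xs -> N (pin pi xs (w k)) <= eps.

Lemma pin_snocZ n (xs : 'I_n -> g) (l : R) e w :
  pin pi (snoc xs (l *: e)) w = l%:C *: pin pi (snoc xs e) w.
Proof. by rewrite !pin_snoc (pi_Z Hpi) (pinZ Hpi). Qed.

Lemma pin_snocD n (xs : 'I_n -> g) e1 e2 w :
  pin pi (snoc xs (e1 + e2)) w = pin pi (snoc xs e1) w + pin pi (snoc xs e2) w.
Proof. by rewrite !pin_snoc (pi_D Hpi) (pinD Hpi). Qed.

Lemma barrel tau n (B : set ('I_n -> g)) (w : nat -> V) (eta : nat -> g) :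
  admissible tau B -> cvgS tau w -> eta @ \oo --> (0 : g) ->
  forall eps : R, 0 < eps ->
  \forall k \near \oo, forall xs, B xs -> N (pin pi (snoc xs (eta k)) (w k)) <= eps.
Proof.
move=> HB Hw Heta eps eps0.
pose D := [set e : g | forall k xs, B xs -> N (pin pi (snoc xs e) (w k)) <= 1].
have D0 : nbhs (0 : g) D.
  apply: Hbar.
  -
    move=> e cl k xs Bx; rewrite leNgt; apply/negP => H1.
    set d := N (pin pi (snoc xs e) (w k)) - 1.
    have d0 : 0 < d by rewrite subr_gt0.
    have [U [U0 HU]] := Hc (w k) (snoc xs e) d0.
    have := U0 ord_max; rewrite snoc_max => /cl [e' [De' Ue']].
    have Hys : forall i, U i (snoc xs e' i).
      move=> i; have [[j ->]|->] := snocP i; last by rewrite snoc_max.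
      by have := nbhs_singleton (U0 (widen_ord (leqnSn n) j)); rewrite !snoc_widen.
    have := HU _ Hys; rewrite (ipnormB Hip).
    have := Nsub Hip (pin pi (snoc xs e) (w k)) (pin pi (snoc xs e') (w k)).
    have := De' k xs Bx.
    rewrite /d; lra.
  -
    move=> x y l; rewrite !in_setE => Dx Dy k xs Bx.
    have -> : conv l x y = (l%:num *: x + (1 - l%:num) *: y : g) by [].
    rewrite pin_snocD !pin_snocZ.
    apply: le_trans (ipnormD Hip _ _) _.
    rewrite !ipnormZ // !ger0_norm ?subr_ge0 ?ge0 ?le1 //.
    have h1 := Dx k xs Bx; have h2 := Dy k xs Bx.
    have l0 : 0 <= l%:num by exact: ge0.
    have l1 : l%:num <= 1 by exact: le1.
    nra.
  -
    move=> l x l1 Dx k xs Bx.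
    rewrite pin_snocZ ipnormZ //.
    rewrite -[1]mul1r; apply: ler_pM => //; first exact: ipnorm_ge0.
    exact: Dx.
  -
    move=> x.
    have B'adm := adm_snoc x HB.
    have [K _ HK] := Hw _ _ B'adm 1 ltr01.
    have Hb := adm_bounded B'adm.
    have : forall m, exists M : R, 0 < M /\ forall k, (k < m)%N -> forall xs, B xs ->
        N (pin pi (snoc xs x) (w k)) <= M.
      elim => [|m [M [M0 HM]]]; first by exists 1.
      have [C HC] := UB Hip Hpi Hc (w m) Hb.
      exists (Num.max M C); split; first by rewrite lt_max M0.
      move=> k; rewrite ltnS leq_eqVlt => /orP[/eqP ->|km] xs Bx.
        by rewrite le_max (HC _ (ex_intro2 _ _ xs Bx erefl)) orbT.
      by rewrite le_max HM.
    case/(_ K) => M [M0 HM].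
    have M10 : 0 < Num.max M 1 by rewrite lt_max M0.
    exists (Num.max M 1)^-1; first by rewrite invr_gt0.
    move=> l hl k xs Bx.
    rewrite pin_snocZ ipnormZ //.
    have hb : N (pin pi (snoc xs x) (w k)) <= Num.max M 1.
      have [kK|kK] := ltnP k K.
        by rewrite le_max HM.
      by rewrite le_max (HK k kK _ (ex_intro2 _ _ xs Bx erefl)) orbT.
    rewrite -(mulVf (lt0r_neq0 M10)); apply: ler_pM => //; first exact: ipnorm_ge0.
have : \forall k \near \oo, ( *:%R eps @` D) (eta k) := Heta _ (nbhs0Z (lt0r_neq0 eps0) D0).
apply: filterS => k [d Dd deq] xs Bx.
rewrite -deq pin_snocZ ipnormZ // ger0_norm; last exact: ltW.
by rewrite -[X in _ <= X]mulr1 ler_pM2l // Dd.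
Qed.

End Barrel.

Section Joint.
Context (R : realType) (g : tvsType R) (br : g -> g -> g)
  (V : lmodType R[i]) (ip : V -> V -> R[i]) (pi : g -> V -> V).
Hypothesis Hip : inner_product ip.
Hypothesis Hpi : unitary_rep br ip pi.
Hypothesis Hc : continuous_rep ip pi.
Hypothesis Hbar : barrelled g.

Local Notation N := (ipnorm ip).

Lemma seq_arg tau (A : set R) (t : R) n (B : set ('I_n -> g))
    (eta : R -> g) (w : R -> V) (eps : R) :
  admissible tau B -> eta @ within A (nbhs t) --> (0 : g) ->
  Defs.cvgV ip pi tau w (within A (nbhs t)) 0 -> 0 < eps ->
  \forall s \near within A (nbhs t),
    forall xs, B xs -> N (pin pi (snoc xs (eta s)) (w s)) <= eps.
Proof.
move=> HB He Hw eps0.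
set P := fun s => forall xs, B xs -> N (pin pi (snoc xs (eta s)) (w s)) <= eps.
have [//|nP] := pselect (\forall s \near within A (nbhs t), P s).
exfalso.
have Hk : forall k : nat, exists s, `|t - s| < k.+1%:R^-1 /\ A s /\ ~ P s.
  move=> k.
  have : ~ (forall s, `|t - s| < k.+1%:R^-1 -> A s -> P s).
    move=> H; apply: nP; rewrite /within; apply/nbhs_ballP.
    by exists k.+1%:R^-1 => //=; rewrite invr_gt0 ltr0Sn.
  move=> /existsNP [s] /not_implyP [hs] /not_implyP [As nPs].
  by exists s.
have [s Hs] := choice Hk.
have T : forall Q : set R, within A (nbhs t) Q -> \forall k \near \oo, Q (s k).
  move=> Q; rewrite /within => /nbhs_ballP [e e0 He'].
  have := near_infty_natSinv_lt (PosNum e0).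
  apply: filterS => k hk.
  have [h1 [h2 _]] := Hs k.
  have hb : ball t e (s k).
    rewrite /ball /=; apply: (lt_trans h1); exact: hk.
  exact: He' _ hb h2.
have Hw' : cvgS ip pi tau (fun k => w (s k)).
  move=> m B' HB' e' e'0.
  apply: (T (fun h => forall xs, B' xs -> N (pin pi xs (w h)) <= e')).
  have := Hw m B' HB' e' e'0; apply: filterS => h H xs Bx.
  by have := H xs Bx; rewrite subr0.
have He' : (fun k => eta (s k)) @ \oo --> (0 : g).
  by move=> U U0; apply: (T (eta @^-1` U)); exact: He U U0.
have := barrel Hip Hpi Hc Hbar HB Hw' He' eps0.
case=> M _ HM.
by have [_ [_]] := Hs M; apply; apply: (HM M (leqnn M)).
Qed.

End Joint.

Section Joint2.
Context (R : realType) (g : tvsType R) (br : g -> g -> g)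
  (V : lmodType R[i]) (ip : V -> V -> R[i]) (pi : g -> V -> V).
Hypothesis Hip : inner_product ip.
Hypothesis Hpi : unitary_rep br ip pi.
Hypothesis Hc : continuous_rep ip pi.
Hypothesis Hbar : barrelled g.

Local Notation N := (ipnorm ip).

Lemma cvg_sub0 (a : R -> g) (F : set_system R) a0 : Filter F ->
  a @ F --> a0 -> (fun s => a s - a0) @ F --> (0 : g).
Proof.
move=> FF Ha U U0.
have : \forall s \near F, (+%R a0 @` U) (a s) := Ha _ (nbhsT a0 U0).
apply: filterS => s [u Uu eq].
rewrite /preimage /= -eq (addrC a0) addrK.
exact: Uu.
Qed.

Lemma pi_xB x u v : pi x (u - v) = pi x u - pi x v.
Proof. by rewrite (pi_xD Hpi) -scaleN1r (pi_xZ Hpi) scaleN1r. Qed.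

Lemma alg3 (M : zmodType) (P1 P2 A1 A2 : M) :
  P1 - A2 = (A1 - A2) + ((P1 - P2) - (A1 - A2)) + (P2 - A2).
Proof. by rewrite (addrC (A1 - A2)) subrK -addrA (addrA (- P2)) addNr add0r. Qed.

Lemma joint tau (A : set R) (t : R) (a : R -> g) (b : R -> V) a0 b0 :
  a @ within A (nbhs t) --> a0 ->
  Defs.cvgV ip pi tau b (within A (nbhs t)) b0 ->
  Defs.cvgV ip pi tau (fun s => pi (a s) (b s)) (within A (nbhs t)) (pi a0 b0).
Proof.
move=> Ha Hb n B HB eps eps0.
have e3 : 0 < eps / 3 by rewrite divr_gt0.
have H1 := Hb n.+1 _ (adm_snoc a0 HB) _ e3.
have Ha' : (fun s => a s - a0) @ within A (nbhs t) --> (0:g) by apply: cvg_sub0.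
have Hb' : Defs.cvgV ip pi tau (fun s => b s - b0) (within A (nbhs t)) 0.
  move=> m B' HB' e e0; have := Hb m B' HB' e e0.
  by apply: filterS => h H xs Bx; rewrite subr0; exact: H.
have H2 := seq_arg Hip Hpi Hc Hbar HB Ha' Hb' e3.
have H3 : \forall s \near within A (nbhs t),
    forall xs, B xs -> N (pin pi (snoc xs (a s - a0)) b0) <= eps / 3.
  exact: (Ha' _ (slot_small Hpi Hc b0 (adm_bounded HB) e3)).
apply: filterS3 H1 H2 H3 => s h1 h2 h3 xs Bx.
have E : pin pi xs (pi (a s) (b s) - pi a0 b0) =
    pin pi (snoc xs a0) (b s - b0) + pin pi (snoc xs (a s - a0)) (b s - b0)
    + pin pi (snoc xs (a s - a0)) b0.
  rewrite !pin_snoc -!(pinD Hpi); congr pin.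
  by rewrite !(pi_B Hpi) !pi_xB; apply: alg3.
rewrite E.
apply: le_trans (ipnormD Hip _ _) _.
apply: le_trans (lerD (ipnormD Hip _ _) (lexx _)) _.
have := h1 _ (ex_intro2 _ _ xs Bx erefl).
have := h2 xs Bx.
have := h3 xs Bx.
lra.
Qed.

End Joint2.

Section Alg.
Context (R : realType) (g : tvsType R) (br : g -> g -> g)
  (V : lmodType R[i]) (ip : V -> V -> R[i]) (pi : g -> V -> V).
Hypothesis Hip : inner_product ip.
Hypothesis Hpi : unitary_rep br ip pi.

Local Notation N := (ipnorm ip).
Local Notation cvgV := (Defs.cvgV ip pi).

Lemma cvgV_cst tau (F : set_system R) (c : V) : Filter F -> cvgV tau (fun _ => c) F c.
Proof.
move=> FF n B HB eps eps0; apply: filterE => h xs Bx.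
by rewrite subrr (pin0 Hpi) (ipnorm0 Hip) ltW.
Qed.

Lemma cvgV_add tau (F : set_system R) f1 f2 l1 l2 : Filter F ->
  cvgV tau f1 F l1 -> cvgV tau f2 F l2 ->
  cvgV tau (fun s => f1 s + f2 s) F (l1 + l2).
Proof.
move=> FF H1 H2 n B HB eps eps0.
have e2 : 0 < eps / 2 by rewrite divr_gt0.
apply: filterS2 (H1 n B HB _ e2) (H2 n B HB _ e2) => h h1 h2 xs Bx.
rewrite opprD addrACA (pinD Hpi).
apply: le_trans (ipnormD Hip _ _) _.
have := h1 xs Bx; have := h2 xs Bx; lra.
Qed.

Lemma ipnormMn v c : N (v *+ c) = c%:R * N v.
Proof.
by rewrite -scaler_nat -[c%:R : R[i]](rmorph_nat (real_complex R)) (ipnormZ Hip) normr_nat.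
Qed.

Lemma cvgV_Mn tau (F : set_system R) f l c : Filter F ->
  cvgV tau f F l -> cvgV tau (fun s => f s *+ c) F (l *+ c).
Proof.
move=> FF H n B HB eps eps0.
have c0 : 0 < c.+1%:R :> R by rewrite ltr0Sn.
have e2 : 0 < eps / c.+1%:R by rewrite divr_gt0.
apply: filterS (H n B HB _ e2) => h h1 xs Bx.
rewrite -mulrnBl (pinMn Hpi) ipnormMn.
have := h1 xs Bx.
rewrite ler_pdivlMr // => h2.
apply: le_trans (_ : c.+1%:R * N (pin pi xs (f h - l)) <= _).
  by rewrite ler_wpM2r ?ipnorm_ge0 // ler_nat.
by rewrite mulrC.
Qed.

Lemma cvgV_sum tau (F : set_system R) m (f : 'I_m -> R -> V) (l : 'I_m -> V) :
  Filter F -> (forall i, cvgV tau (f i) F (l i)) ->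
  cvgV tau (fun s => \sum_(i < m) f i s) F (\sum_(i < m) l i).
Proof.
move=> FF; elim: m f l => [|m IH] f l H.
  have -> : (fun s => \sum_(i < 0) f i s) = (fun _ => 0).
    by apply: funext => s; rewrite big_ord0.
  by rewrite big_ord0; exact: cvgV_cst.
have -> : (fun s => \sum_(i < m.+1) f i s) =
    (fun s => \sum_(i < m) f (widen_ord (leqnSn m) i) s + f ord_max s).
  by apply: funext => s; rewrite big_ord_recr.
rewrite big_ord_recr; apply: (cvgV_add FF _ (H ord_max)).
by apply: IH => i; exact: H.
Qed.

End Alg.

Lemma pascal (M : zmodType) (T : nat -> nat -> M) j :
  \sum_(i < j.+1) (T i (j - i).+1%N + T i.+1 (j - i)%N) *+ 'C(j, i) =
  \sum_(i < j.+2) T i (j.+1 - i)%N *+ 'C(j.+1, i).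
Proof.
rewrite big_ord_recl [in RHS]big_ord_recl /=.
rewrite !subn0 !bin0 !mulr1n.
under eq_bigr do rewrite mulrnDl.
rewrite big_split /=.
under [in RHS]eq_bigr => i _ do rewrite /bump /= add1n subSS binS mulrnDr.
rewrite [in RHS]big_split /=.
rewrite -!addrA; congr (_ + _).
rewrite [X in _ = X + _]big_ord_recr /= bin_small // mulr0n addr0.
rewrite [X in _ = _ + X]big_ord_recl /= bin0 mulr1n subn0.
rewrite [in RHS]addrCA; congr (_ + (_ + _)).
by apply: eq_bigr => i _; rewrite /bump /= add1n subnSK.
Qed.

Section Deriv.
Context (R : realType) (g : tvsType R) (br : g -> g -> g)
  (V : lmodType R[i]) (ip : V -> V -> R[i]) (pi : g -> V -> V).
Hypothesis Hip : inner_product ip.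
Hypothesis Hpi : unitary_rep br ip pi.
Hypothesis Hc : continuous_rep ip pi.
Hypothesis Hbar : barrelled g.

Local Notation cvgV := (Defs.cvgV ip pi).

Lemma prod_deriv tau (A : set R) (t : R) (a : R -> g) (b : R -> V) a' b' :
  a @ within A (nbhs t) --> a t ->
  (fun s => (s - t)^-1 *: (a s - a t)) @ within A (nbhs t) --> a' ->
  cvgV tau (fun s => (s - t)^-1%:C *: (b s - b t)) (within A (nbhs t)) b' ->
  cvgV tau (fun s => (s - t)^-1%:C *: (pi (a s) (b s) - pi (a t) (b t)))
    (within A (nbhs t)) (pi (a t) b' + pi a' (b t)).
Proof.
move=> Ha Ha' Hb.
have -> : (fun s => (s - t)^-1%:C *: (pi (a s) (b s) - pi (a t) (b t))) =
  (fun s => pi (a s) ((s - t)^-1%:C *: (b s - b t)) + pi ((s - t)^-1 *: (a s - a t)) (b t)).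
  apply: funext => s.
  rewrite (pi_xZ Hpi) (pi_Z Hpi) -scalerDr (pi_xB Hpi) (pi_B Hpi).
  by rewrite addrA subrK.
apply: (cvgV_add Hip Hpi _ (joint Hip Hpi Hc Hbar Ha Hb)).
apply: (joint Hip Hpi Hc Hbar Ha').
exact: (cvgV_cst Hip Hpi).
Qed.

End Deriv.

Lemma le_ext_mono i j n : (i <= j)%N -> le_ext j n -> le_ext i n.
Proof. by case: n => //= m; apply: leq_trans. Qed.
Lemma lt_ext_mono i j n : (i <= j)%N -> lt_ext j n -> lt_ext i n.
Proof. by case: n => //= m; apply: leq_ltn_trans. Qed.
Lemma lt_le_ext j n : lt_ext j n -> le_ext j n.
Proof. by case: n => //= m /ltnW. Qed.

Lemma within_restr (R : realType) (g : tvsType R) (A B : set R) (t : R) (f : R -> g) (l : g) :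
  A `<=` B -> f @ within B (nbhs t) --> l -> f @ within A (nbhs t) --> l.
Proof. by move=> AB H U U0; apply: (within_subset _ AB); exact: H U U0. Qed.

Local Close Scope complex_scope.

Theorem proposition3p18 (R : realType) (g : tvsType R) (br : g -> g -> g)
    (V : lmodType R[i]) (ip : V -> V -> R[i]) (pi : g -> V -> V)
    (tau : topV) (n : option nat) (I : interval R)
    (xis : nat -> R -> g) (psis : nat -> R -> V) :
  lie_bracket br -> barrelled g ->
  inner_product ip -> unitary_rep br ip pi -> continuous_rep ip pi ->
  Cng I n xis -> CnV ip pi tau I n psis ->
  CnV ip pi tau I n
    (fun k t => \sum_(j < k.+1) pi (xis j t) (psis (k - j)%N t) *+ 'C(k, j)).
Proof.
move=> _ Hbar Hip Hpi Hc [Xc Xd] [Pc Pd]; split.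
  move=> j hj t tI.
  apply: (cvgV_sum Hip Hpi) => // i.
  apply: (cvgV_Mn Hip Hpi) => //.
  apply: (joint Hip Hpi Hc Hbar).
    by apply: Xc => //; apply: (le_ext_mono _ hj); rewrite -ltnS.
  by apply: Pc => //; apply: (le_ext_mono _ hj); rewrite leq_subr.
move=> j hj t tI.
have sub : [set s | s \in I /\ s != t] `<=` [set s | s \in I] by move=> s [].
have -> : (fun s => ((s - t)^-1)%:C%C *:
    ((\sum_(i < j.+1) pi (xis i s) (psis (j - i)%N s) *+ 'C(j, i)) -
     \sum_(i < j.+1) pi (xis i t) (psis (j - i)%N t) *+ 'C(j, i))) =
  (fun s => \sum_(i < j.+1) (((s - t)^-1)%:C%C *:
     (pi (xis i s) (psis (j - i)%N s) - pi (xis i t) (psis (j - i)%N t))) *+ 'C(j, i)).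
  apply: funext => s; rewrite -sumrB scaler_sumr; apply: eq_bigr => i _.
  by rewrite -mulrnBl scalerMnr.
rewrite -(pascal (fun a b => pi (xis a t) (psis b t))).
apply: (cvgV_sum Hip Hpi) => // i.
apply: (cvgV_Mn Hip Hpi) => //.
have hi : (i <= j)%N by rewrite -ltnS.
have hji : (j - i <= j)%N by rewrite leq_subr.
apply: (prod_deriv Hip Hpi Hc Hbar).
- apply: within_restr sub _.
  by apply: Xc => //; apply: lt_le_ext; apply: (lt_ext_mono hi hj).
- by apply: Xd => //; apply: (lt_ext_mono hi hj).
- by apply: Pd => //; apply: (lt_ext_mono hji hj).
Qed.
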